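(* Let $D$ be a link diagram and $\Gamma$ its associated fat-vertex graph. Then $\omega(\Gamma)\geq\omega(D)$.
   Context: Wirtinger number of a diagram: view $D$ (with $n$ crossings) as a union of $n$ strands (arcs between undercrossings); two strands are adjacent if they are the two under-strands at some crossing. A partial coloring is a nonempty subset $A$ of the set $S(D)$ of strands. A coloring move $A_1\to A_2$ is allowed if $A_2\setminus A_1=\{s_j\}$ is a single strand and $s_j$ is adjacent to some $s_i\in A_1$ at a crossing whose over-strand $s_k$ lies in $A_1$. $D$ is $k$-colorable if there is a $k$-element set $A_0\subset S(D)$ and a sequence of $n-k$ coloring moves $A_0\to\cdots\to A_{n-k}=S(D)$; $\omega(D)$ is the least such $k$. Fat-vertex graph: from $D$ and a checkerboard spanning surface $F$ (a union of disks and twisted bands), form the planar graph whose vertices are the disks of $F$, drawn as disjoint closed disks (''fat vertices''), and whose edges are the cores of the bands. A segment of $\Gamma$ is either an edge or a connected arc of $\partial v\setminus\{\text{endpoints of edges}\}$ for a fat vertex $v$; let $S(\Gamma)$ be the set of segments ($m$ elements) and $e(\Gamma)$ the set of edges. For $A_1\subset A_2\subset S(\Gamma)$ with $A_2\setminus A_1=\{s\}$, a coloring move $A_1\to A_2$ is allowed if either (1) $s$ is an edge and both boundary segments adjacent to $s$ at one of its (same) vertex are in $A_1$, or (2) $s$ is an arc in the boundary of a fat vertex and is incident to an edge in $A_1$. $\Gamma$ is $k$-colorable if there is a $k$-element set $A_0\subset S(\Gamma)\setminus e(\Gamma)$ and a sequence of $m-k$ coloring moves ending at $S(\Gamma)$;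 $\omega(\Gamma)$ is the least such $k$. *)

(* Defs.v *)
From mathcomp Require Import all_boot fingroup perm.
Set Implicit Arguments. Unset Strict Implicit. Unset Printing Implicit Defensive.

(* Link diagrams as combinatorial maps on a finite set H of darts
   (half-edges of the projection):
   - [rot] : counterclockwise rotation of the four darts around a crossing;
   - [edg] : fixed-point-free involution pairing the two halves of an edge
             of the projection (an arc between two consecutive crossings);
   - [over d] : the dart d belongs to the over-strand at its crossing.
   Dart d represents the corner between d and [rot d]; faces of the
   projection are the orbits of [fun d => edg (rot d)] acting on corners. *)
Record diagram (H : finType) := Diagram {
  rot : {perm H};
  edg : {perm H};
  over : H -> bool }.

Definition glink (H : finType) (D : diagram H) : rel H :=
  [rel x y | (y == rot D x) || (y == edg D x)].

Definition face_step (H : finType) (D : diagram H) : H -> H :=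
  fun d => edg D (rot D d).

(* D is a link diagram: a 4-valent map of genus 0 (Euler's formula
   V - E + F = 2 C on every component) with over/under information at
   every crossing (opposite darts share over/under status, adjacent ones
   do not). *)
Definition is_link_diagram (H : finType) (D : diagram H) : Prop :=
  [/\ forall d, #|fconnect (rot D) d| = 4,
      forall d, edg D (edg D d) = d,
      forall d, edg D d != d,
      forall d, over D (rot D d) = ~~ over D d &
      fcard (rot D) H + fcard (face_step D) H
        = fcard (edg D) H + 2 * n_comp (glink D) H ].

Inductive reach (T : Type) (mv : T -> T -> Prop) : T -> T -> Prop :=
  | reach_refl x : reach mv x x
  | reach_step x y z : mv x y -> reach mv y z -> reach mv x z.

(* Two darts lie on the same strand if they are the two halves of an edge
   of the projection, or if they are opposite darts of the over-strand at a
   crossing (strands pass over crossings and are cut at undercrossings). *)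
Definition strand_link (H : finType) (D : diagram H) : rel H :=
  [rel x y | [|| y == edg D x, x == edg D y,
                 over D x && (y == rot D (rot D x)) |
                 over D y && (x == rot D (rot D y))]].

Definition strand (H : finType) (D : diagram H) (d : H) : {set H} :=
  [set y | connect (strand_link D) d y].

Definition strands (H : finType) (D : diagram H) : {set {set H}} :=
  [set strand D d | d in H].

(* Coloring move A1 -> A2 for D: at a crossing, with under darts u and
   rot^2 u and over-strand through rot u, the over-strand and the
   under-strand through u are colored and A2 adds the other under-strand. *)
Definition wmove (H : finType) (D : diagram H) (A1 A2 : {set {set H}}) : Prop :=
  exists u : H,
    [/\ ~~ over D u,
        strand D (rot D u) \in A1,
        strand D u \in A1,
        strand D (rot D (rot D u)) \notin A1 &
        A2 = strand D (rot D (rot D u)) |: A1].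

Definition D_colorable (H : finType) (D : diagram H) (k : nat) : Prop :=
  exists A0 : {set {set H}},
    [/\ A0 \subset strands D, A0 != set0, #|A0| = k &
        reach (wmove D) A0 (strands D)].

Definition is_wirtinger_number (H : finType) (D : diagram H) (k : nat) : Prop :=
  D_colorable D k /\ forall j, D_colorable D j -> k <= j.

(* [sh d] : the corner between d and rot d lies in the shaded region
   (i.e. in a disk of the checkerboard surface F). *)
Definition is_checkerboard (H : finType) (D : diagram H) (sh : H -> bool) : Prop :=
  (forall d, sh (rot D d) = ~~ sh d) /\
  (forall d, sh (edg D (rot D d)) = sh d).

(* Segments of the fat-vertex graph Gamma:
   inl (porbit edg d) = the arc of the boundary of the fat vertex (shaded
                        region) running along the projection edge of d;
   inr (porbit rot d) = the edge of Gamma (core of the band) at the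
                        crossing of d. *)
Definition segment (H : finType) := ({set H} + {set H})%type.

Definition arc_seg (H : finType) (D : diagram H) (d : H) : segment H :=
  inl (porbit (edg D) d).
Definition band_seg (H : finType) (D : diagram H) (d : H) : segment H :=
  inr (porbit (rot D) d).

Definition segments (H : finType) (D : diagram H) : {set segment H} :=
  [set arc_seg D d | d in H] :|: [set band_seg D d | d in H].
Definition gedges (H : finType) (D : diagram H) : {set segment H} :=
  [set band_seg D d | d in H].

(* Coloring moves for Gamma:
   (1) color the edge at the crossing of d if, at one of its ends (a shaded
       corner d), both adjacent boundary arcs (along the edges of d and of
       rot d) are colored;
   (2) color the boundary arc along the edge of d if the edge of Gamma at
       one of its endpoints (the crossing of d, d ranging over both halves)
       is colored. *)
Definition gmove (H : finType) (D : diagram H) (sh : H -> bool)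
    (A1 A2 : {set segment H}) : Prop :=
  (exists d : H,
     [/\ sh d, arc_seg D d \in A1, arc_seg D (rot D d) \in A1,
         band_seg D d \notin A1 & A2 = band_seg D d |: A1])
  \/
  (exists d : H,
     [/\ band_seg D d \in A1, arc_seg D d \notin A1 &
         A2 = arc_seg D d |: A1]).

Definition G_colorable (H : finType) (D : diagram H) (sh : H -> bool)
    (k : nat) : Prop :=
  exists A0 : {set segment H},
    [/\ A0 \subset segments D :\: gedges D, #|A0| = k &
        reach (gmove D sh) A0 (segments D)].

Definition is_fat_wirtinger_number (H : finType) (D : diagram H)
    (sh : H -> bool) (k : nat) : Prop :=
  G_colorable D sh k /\ forall j, G_colorable D sh j -> k <= j.

(* Main.v *)
Require Import Defs.
From mathcomp Require Import all_boot fingroup perm.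
Import Defs.
Set Implicit Arguments. Unset Strict Implicit. Unset Printing Implicit Defensive.

Lemma reach_trans (T : Type) (mv : T -> T -> Prop) x y z :
  reach mv x y -> reach mv y z -> reach mv x z.
Proof.
elim=> [//|a b c h _ IH] hz; apply: reach_step h _; exact: IH.
Qed.

Lemma setU1_eq (T : finType) (x : T) (A : {set T}) : x \in A -> x |: A = A.
Proof. by move=> h; apply/setUidPr; rewrite sub1set. Qed.

Section Sim.
Variables (H : finType) (D : diagram H) (sh : H -> bool).

Definition Pset (A : {set segment H}) : {set H} :=
  [set x | (arc_seg D x \in A) || (band_seg D x \in A)].
Definition Bset (A : {set segment H}) : {set {set H}} := (strand D) @: Pset A.

Lemma link_sym x y : strand_link D x y = strand_link D y x.
Proof.
rewrite /strand_link /=.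
by rewrite orbA (orbC (y == edg D x)) -orbA (orbC (over D x && _)).
Qed.

Lemma strand_eq x y : strand_link D x y -> strand D x = strand D y.
Proof.
move=> hxy; apply/setP=> z; rewrite !inE; apply/idP/idP => h.
  apply: connect_trans h; apply: connect1; by rewrite link_sym.
by apply: connect_trans h; apply: connect1.
Qed.

Lemma strand_edg x : strand D (edg D x) = strand D x.
Proof. by symmetry; apply: strand_eq; rewrite /strand_link /= eqxx. Qed.

Lemma strand_over x : over D x -> strand D (rot D (rot D x)) = strand D x.
Proof. by move=> h; symmetry; apply: strand_eq; rewrite /strand_link /= h eqxx !orbT. Qed.

Lemma strand_porbit_edg x y : y \in porbit (edg D) x -> strand D y = strand D x.
Proof.
move/porbitP=> [i ->]; elim: i => [|i IH]; first by rewrite expg0 perm1.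
by rewrite expgSr permM strand_edg.
Qed.

Lemma band_rot x : band_seg D (rot D x) = band_seg D x.
Proof. by rewrite /band_seg; have := porbit_perm (rot D) 1 x; rewrite expg1 => ->. Qed.

Hypothesis HL : is_link_diagram D.

Lemma rot4 x : rot D (rot D (rot D (rot D x))) = x.
Proof.
case: HL => h4 _ _ _ _.
have := iter_order (@perm_inj _ (rot D)) x.
by rewrite /fingraph.order h4.
Qed.

Lemma rot_orbit x y : y \in porbit (rot D) x ->
  y \in [:: x; rot D x; rot D (rot D x); rot D (rot D (rot D x))].
Proof.
move/porbitP=> [i ->]; elim: i => [|i IH]; first by rewrite expg0 perm1 inE eqxx.
rewrite expgSr permM; move: IH; rewrite !inE => /or4P [] /eqP ->;
  by rewrite ?rot4 ?eqxx ?orbT.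
Qed.

Lemma Bset_mono (A1 A2 : {set segment H}) : A1 \subset A2 -> Bset A1 \subset Bset A2.
Proof.
move=> s; apply: imsetS; apply/subsetP=> x; rewrite !inE => /orP [] h;
  by rewrite (subsetP s _ h) ?orbT.
Qed.

Lemma sim A1 A2 : gmove D sh A1 A2 -> reach (wmove D) (Bset A1) (Bset A2).
Proof.
case=> [[d [_ a1 a2 _ ->]] | [d [b1 _ ->]]].
- have inB1 : forall x, x \in Pset A1 -> strand D x \in Bset A1.
    by move=> x hx; apply: imset_f.
  have hd : strand D d \in Bset A1 by apply: inB1; rewrite inE a1.
  have hrd : strand D (rot D d) \in Bset A1 by apply: inB1; rewrite inE a2.
  have key : Bset (band_seg D d |: A1) =
     strand D (rot D (rot D d)) |: (strand D (rot D (rot D (rot D d))) |: Bset A1).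
    apply/eqP; rewrite eqEsubset; apply/andP; split.
      apply/subsetP => _ /imsetP [x + ->].
      rewrite !inE => /orP [/orP [//|ha]|/orP [/eqP hb|hb]].
      + by rewrite inB1 ?orbT // inE ha.
      + have : x \in porbit (rot D) d.
          by move: hb; rewrite /band_seg => -[<-]; apply: porbit_id.
        move/rot_orbit; rewrite !inE => /or4P [] /eqP ->;
          by rewrite ?eqxx ?hd ?hrd ?orbT.
      + by rewrite inB1 ?orbT // inE hb orbT.
    rewrite !subUset !sub1set; apply/and3P; split.
    + by apply: imset_f; rewrite !inE !band_rot eqxx orbT.
    + by apply: imset_f; rewrite !inE !band_rot eqxx orbT.
    + by apply: Bset_mono; apply: subsetUr.
  rewrite key.
  case: HL => _ _ _ hov _.
  case hod: (over D d).
  + have hr : over D (rot D d) = false by rewrite hov hod.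
    rewrite strand_over // setUCA (setU1_eq hd).
    case hin: (strand D (rot D (rot D (rot D d))) \in Bset A1).
      by rewrite (setU1_eq hin); apply: reach_refl.
    apply: reach_step (reach_refl _ _).
    exists (rot D d); split; rewrite ?hr ?hin //.
    by rewrite (strand_over hod).
  + have hr : over D (rot D d) = true by rewrite hov hod.
    rewrite (strand_over hr) (setU1_eq hrd).
    case hin: (strand D (rot D (rot D d)) \in Bset A1).
      by rewrite (setU1_eq hin); apply: reach_refl.
    apply: reach_step (reach_refl _ _).
    exists d; split; rewrite ?hod ?hin //.
- suff -> : Bset (arc_seg D d |: A1) = Bset A1 by apply: reach_refl.
  apply/eqP; rewrite eqEsubset (Bset_mono (subsetUr _ _)) andbT.
  apply/subsetP => _ /imsetP [x + ->].
  rewrite !inE => /orP [/orP [/eqP ha|ha]|/orP [/eqP hb|hb]].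
  + have : x \in porbit (edg D) d.
      by move: ha; rewrite /arc_seg => -[<-]; apply: porbit_id.
    move/strand_porbit_edg ->; apply: imset_f; by rewrite inE b1 orbT.
  + by apply: imset_f; rewrite inE ha.
  + by [].
  + by apply: imset_f; rewrite inE hb orbT.
Qed.

Lemma sim_reach X Y : reach (gmove D sh) X Y -> reach (wmove D) (Bset X) (Bset Y).
Proof.
elim=> [x|x y z h _ IH]; first exact: reach_refl.
exact: reach_trans (sim h) IH.
Qed.

End Sim.

Lemma reach0 (H : finType) (D : diagram H) sh X Y :
  reach (gmove D sh) X Y -> X = set0 -> Y = set0.
Proof.
elim=> [//|x y z h _ IH] e; subst x.
by case: h => [[d [_ h _ _ _]]|[d [h _ _]]]; rewrite in_set0 in h.
Qed.

Theorem lemma4p4 (H : finType) (D : diagram H) (sh : H -> bool)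
  (kD kG : nat) :
  is_link_diagram D ->
  is_checkerboard D sh ->
  is_wirtinger_number D kD ->
  is_fat_wirtinger_number D sh kG ->
  kD <= kG.
Proof.
move=> HL _ [[B0 [sB0 nB0 _ _]] minD] [[A0 [sA0 cA0 r]] _].
have [s0 s0in] := set0Pn _ nB0.
have /imsetP [d0 _ _] := subsetP sB0 _ s0in.
have BS : Bset D (segments D) = strands D.
  apply/eqP; rewrite eqEsubset; apply/andP; split; apply/subsetP.
    by move=> _ /imsetP [x _ ->]; apply: imset_f.
  move=> _ /imsetP [x _ ->]; apply: imset_f.
  by rewrite !inE imset_f.
have nA0 : A0 != set0.
  apply/negP => /eqP e; have := reach0 r e => hs.
  have : arc_seg D d0 \in segments D by rewrite !inE imset_f.
  by rewrite hs in_set0.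
have [a ain] := set0Pn _ nA0.
have noband : forall x, band_seg D x \notin A0.
  move=> x; apply/negP => h; have := subsetP sA0 _ h.
  by rewrite !inE imset_f ?andbF.
have sBA : Bset D A0 \subset strands D.
  by apply/subsetP => _ /imsetP [x _ ->]; apply: imset_f.
pose f := fun s : segment H => match s with
  | inl e => strand D (odflt d0 [pick y in e]) | inr _ => set0 end.
have cB : #|Bset D A0| <= #|A0|.
  apply: leq_trans (leq_imset_card f A0).
  apply: subset_leq_card; apply/subsetP => _ /imsetP [x + ->].
  rewrite inE (negbTE (noband x)) orbF => hx.
  have -> : strand D x = f (arc_seg D x).
    rewrite /f /arc_seg; case: pickP => [y hy|hn].
      by rewrite (strand_porbit_edg hy).
    by have := hn x; rewrite porbit_id.
  exact: imset_f.
have nB : Bset D A0 != set0.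
  have := subsetP sA0 _ ain; rewrite !inE => /andP [hg /orP [] /imsetP [x _ ex]].
    apply/set0Pn; exists (strand D x); apply: imset_f; by rewrite inE -ex ain.
  by rewrite ex imset_f in hg.
have := minD #|Bset D A0|.
move=> h; rewrite -cA0; apply: leq_trans cB; apply: h.
rewrite /D_colorable; exists (Bset D A0); split => //.
rewrite -BS; exact: (sim_reach HL r).
Qed.
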